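(* Let $\mathcal A$ be a class of spaces and let $X$ be a compactum with a binary normal closed subbase $\mathcal S$ such that the superextension $\lambda X$ is an absolute extensor for all spaces in $\mathcal A$. Then every open $\mathcal S$-convex continuous surjection $f\colon X\to Y$ is $\mathcal A$-soft.
   Context: All spaces are Tychonoff and maps continuous. A space $K$ is an absolute extensor for $Z$ if every continuous map from a closed subset of $Z$ to $K$ extends continuously to $Z$. A map $f\colon X\to Y$ is $\mathcal A$-soft if for any $Z\in\mathcal A$, closed $A\subset Z$ and continuous $k\colon Z\to Y$, $h\colon A\to X$ with $f\circ h=k|A$, there is a continuous $g\colon Z\to X$ extending $h$ with $f\circ g=k$. A family of sets is linked if any two members intersect. The superextension $\lambda X$ is the set of all maximal linked systems of closed subsets of $X$ with the topology generated by the subbase $\{U^+:U\subset X\text{ open}\}$, $U^+=\{\eta\in\lambda X:F\subset U\text{ for some }F\in\eta\}$. A family $\mathcal S$ of closed subsets of $X$ is a closed subbase if every closed set is an intersection of finite unions of members of $\mathcal S$; it is binary if every linked subfamily has nonempty intersection; it is normal if for every disjoint $S_0,S_1\in\mathcal S$ there exist $T_0,T_1\in\mathcal S$ with $S_0\cap T_1=\varnothing=T_0\cap S_1$ and $T_0\cup T_1=X$. For $B\subset X$, $I_{\mathcal S}(B)=\bigcap\{S\in\mathcal S:B\subset S\}$; $B$ is $\mathcal S$-convex if $I_{\mathcal S}(\{x,y\})\subset B$ for all $x,y\in B$; $f$ is $\mathcal S$-convex if all its fibers are $\mathcal S$-convex. *)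

(* Defs.v *)
From HB Require Import structures.
From mathcomp Require Import all_boot all_order.
From mathcomp Require Import all_classical.
From mathcomp Require Import topology normedtype.
Set Implicit Arguments. Unset Strict Implicit. Unset Printing Implicit Defensive.
Local Open Scope classical_set_scope.

Definition tychonoff_space (T : topologicalType) : Prop :=
  completely_regular_space T /\ hausdorff_space T.

Definition compactum (T : topologicalType) : Prop :=
  compact [set: T] /\ hausdorff_space T.

Definition linked {X : Type} (L : set (set X)) : Prop :=
  forall A B, L A -> L B -> A `&` B !=set0.

Definition mls {X : topologicalType} (eta : set (set X)) : Prop :=
  [/\ (forall F, eta F -> closed F), linked eta &
      forall eta' : set (set X), (forall F, eta' F -> closed F) ->
        linked eta' -> eta `<=` eta' -> eta' = eta].

Record superext (X : topologicalType) := Superext {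
  sx_sys :> set (set X);
  sx_mls : mls sx_sys }.

Definition plus_set {X : topologicalType} (U : set X) : set (superext X) :=
  [set eta | exists2 F, sx_sys eta F & F `<=` U].

HB.instance Definition _ (X : topologicalType) := gen_eqMixin (superext X).
HB.instance Definition _ (X : topologicalType) := gen_choiceMixin (superext X).
HB.instance Definition _ (X : topologicalType) :=
  @isSubBaseTopological.Build (superext X) (set X) (@open X) (@plus_set X).

(** K is an absolute extensor for Z. Maps from a closed subset B of Z are
    represented as functions on Z continuous on B (subspace topology). *)
Definition AE_for (K Z : topologicalType) : Prop :=
  forall (B : set Z) (g : Z -> K), closed B -> {within B, continuous g} ->
    exists G : Z -> K, continuous G /\ forall z, B z -> G z = g z.

Definition space_class := topologicalType -> Prop.

Definition soft (A : space_class) {X Y : topologicalType} (f : X -> Y) : Prop :=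
  forall (Z : topologicalType), A Z ->
  forall (B : set Z) (k : Z -> Y) (h : Z -> X),
    closed B -> continuous k -> {within B, continuous h} ->
    (forall z, B z -> f (h z) = k z) ->
    exists g : Z -> X, [/\ continuous g, (forall z, B z -> g z = h z) &
                          forall z, f (g z) = k z].

Definition fin_union {X : Type} (S : set (set X)) (G : set X) : Prop :=
  exists s : seq (set X), (forall A, A \in s -> S A) /\
    G = \big[setU/set0]_(A <- s) A.

Definition closed_subbase {X : topologicalType} (S : set (set X)) : Prop :=
  (forall A, S A -> closed A) /\
  forall F : set X, closed F ->
    exists FF : set (set X), FF `<=` fin_union S /\ F = \bigcap_(G in FF) G.

Definition binary_family {X : Type} (S : set (set X)) : Prop :=
  forall L : set (set X), L `<=` S -> linked L -> \bigcap_(A in L) A !=set0.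

Definition normal_family {X : Type} (S : set (set X)) : Prop :=
  forall S0 S1, S S0 -> S S1 -> S0 `&` S1 = set0 ->
    exists T0 T1, [/\ S T0, S T1, S0 `&` T1 = set0, T0 `&` S1 = set0 &
                      T0 `|` T1 = setT].

Definition I_S {X : Type} (S : set (set X)) (B : set X) : set X :=
  \bigcap_(A in [set A | S A /\ B `<=` A]) A.

Definition S_convex {X : Type} (S : set (set X)) (B : set X) : Prop :=
  forall x y, B x -> B y -> I_S S [set x; y] `<=` B.

Definition S_convex_map {X Y : Type} (S : set (set X)) (f : X -> Y) : Prop :=
  forall y, S_convex S (f @^-1` [set y]).

Definition open_map {X Y : topologicalType} (f : X -> Y) : Prop :=
  forall U : set X, open U -> open (f @` U).

(* Main.v *)
Require Import Defs.
From HB Require Import structures.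
From mathcomp Require Import all_boot all_order.
From mathcomp Require Import all_classical.
From mathcomp Require Import topology normedtype.
From mathcomp Require Import finmap.
Local Open Scope classical_set_scope.

Set Implicit Arguments. Unset Strict Implicit. Unset Printing Implicit Defensive.

Section MLS.
Context {X : topologicalType}.

Lemma mls_closed (eta : set (set X)) F : mls eta -> eta F -> closed F.
Proof. by case=> cl _ _; exact: cl. Qed.

Lemma mls_linked (eta : set (set X)) A B : mls eta -> eta A -> eta B -> A `&` B !=set0.
Proof. by case=> _ lk _; exact: lk. Qed.

Lemma mls_add (eta : set (set X)) T : mls eta -> closed T -> T !=set0 ->
  (forall H, eta H -> H `&` T !=set0) -> eta T.
Proof.
move=> [cl lk mx] cT nT HT.
have E := mx (eta `|` [set T]).
suff : (eta `|` [set T]) = eta by move=> <-; right.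
apply: E.
- by move=> F [/cl|->].
- move=> A B [eA|->] [eB|->].
  + exact: lk.
  + exact: HT.
  + by rewrite setIC; exact: HT.
  + by rewrite setIid.
- by move=> F eF; left.
Qed.

Lemma mls_setT (eta : set (set X)) : mls eta -> (exists x : X, True) -> eta setT.
Proof.
move=> m [x _]; apply: mls_add => //.
  by exists x.
by move=> H eH; rewrite setIT; have := mls_linked m eH eH; rewrite setIid.
Qed.

Lemma mls_disj (eta : set (set X)) T : mls eta -> (exists x : X, True) ->
  closed T -> ~ eta T -> exists2 G, eta G & G `&` T = set0.
Proof.
move=> m ex cT nT.
have [->|/set0P T0] := eqVneq T set0.
  by exists setT; [exact: mls_setT|rewrite setI0].
apply: contrapT => nG; apply: nT; apply: mls_add => // H eH.
apply/set0P/eqP => HT; apply: nG; by exists H.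
Qed.

End MLS.

Lemma bigU_mem {X : Type} (s : seq (set X)) x :
  (\big[setU/set0]_(A <- s) A) x -> exists2 A, A \in s & A x.
Proof.
elim: s => [|A s IH]; first by rewrite big_nil.
rewrite big_cons => -[Ax|/IH [B Bs Bx]]; first by exists A => //; rewrite inE eqxx.
by exists B => //; rewrite inE Bs orbT.
Qed.

Lemma mem_bigU {X : Type} (s : seq (set X)) A x :
  A \in s -> A x -> (\big[setU/set0]_(B <- s) B) x.
Proof.
elim: s => [//|B s IH]; rewrite inE big_cons => /orP [/eqP <-|/IH H] Ax.
  by left.
by right; exact: H.
Qed.

Section Sep.
Context {X : topologicalType} (S : set (set X)).
Hypothesis hcs : closed_subbase S.
Hypothesis hT1 : forall x : X, closed [set x].
Hypothesis hbin : binary_family S.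

Lemma sep1 (p q : X) : p <> q -> exists T, [/\ S T, T p & ~ T q].
Proof.
move=> pq; case: hcs => _ H; have [FF [FFs E]] := H _ (@hT1 p).
have : ~ (\bigcap_(G in FF) G) q by rewrite -E => /= qp; apply: pq.
move=> /existsNP [G /not_implyP [FFG nGq]].
have : (\bigcap_(G in FF) G) p by rewrite -E.
move=> /(_ _ FFG) Gp.
have [s [sS Gs]] := FFs _ FFG.
move: Gp; rewrite Gs. move=> GG. have [A As Ap] := bigU_mem GG.
exists A; split => //; first exact: sS.
by move=> Aq; apply: nGq; rewrite Gs; exact: (mem_bigU As).
Qed.

Lemma sep2 (p q : X) : p <> q ->
  exists S0 S1, [/\ S S0, S S1, S0 p, S1 q & S0 `&` S1 = set0].
Proof.
move=> pq; have [T [ST Tp nTq]] := sep1 pq.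
pose L := [set U | U = T \/ (S U /\ U q /\ exists t, T t /\ ~ U t)].
have LS : L `<=` S by move=> U [->|[]].
have nlk : ~ linked L.
  move=> lk; have [w Lw] := hbin LS lk.
  have Tw : T w by apply: Lw; left.
  have wq : w <> q by move=> E; apply: nTq; rewrite -E.
  have [U [SU Uw nUq]] := sep1 wq.
  have qw : q <> w by move=> E; apply: wq.
  have [V [SV Vq nVw]] := sep1 qw.
  suff LV : L V by apply: nVw; exact: Lw.
  by right; split; [exact: SV|split; [exact: Vq|by exists w]].
have /existsNP [A /existsNP [B /not_implyP [LA /not_implyP [LB AB]]]] := nlk.
have AB0 : A `&` B = set0 by apply/eqP; apply: contrapT => H; apply: AB; apply/set0P; apply/negP.
case: LA => [EA|[SA [Aq _]]]; case: LB => [EB|[SB [Bq _]]].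
- by move: AB0; rewrite EA EB setIid => T0; move: Tp; rewrite T0.
- by exists T, B; split => //; rewrite -EA.
- by exists T, A; split => //; rewrite -EB setIC.
- by have : (A `&` B) q by []; rewrite AB0.
Qed.

End Sep.

Section Core.
Context {X Y : topologicalType} (S : set (set X)) (f : X -> Y).
Hypothesis hcs : closed_subbase S.
Hypothesis hT1 : forall x : X, closed [set x].
Hypothesis hbin : binary_family S.
Hypothesis hnorm : normal_family S.
Hypothesis hsurj : forall y : Y, exists x : X, f x = y.
Hypothesis hconv : S_convex_map S f.
Hypothesis hex : exists x : X, True.

Definition Pset (y : Y) (eta : set (set X)) : set X :=
  [set p | f p = y /\ forall T, S T -> eta T -> (exists q, f q = y /\ T q) -> T p].

Lemma P_uniq y eta a b : mls eta -> Pset y eta a -> Pset y eta b -> a = b.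
Proof.
move=> m [fa Ha] [fb Hb]; apply: contrapT => ab.
have [S0 [S1 [SS0 SS1 S0a S1b S01]]] := sep2 hcs hT1 hbin ab.
have [T0 [T1 [ST0 ST1 S0T1 T0S1 T01]]] := hnorm SS0 SS1 S01.
have naT1 : ~ T1 a by move=> T1a; have : (S0 `&` T1) a by []; rewrite S0T1.
have nbT0 : ~ T0 b by move=> T0b; have : (T0 `&` S1) b by []; rewrite T0S1.
have T0a : T0 a.
  have : (T0 `|` T1) a by rewrite T01.
  by case => // /naT1.
have T1b : T1 b.
  have : (T0 `|` T1) b by rewrite T01.
  by case => // /nbT0.
have cT0 : closed T0 by case: hcs => + _; apply.
have cT1 : closed T1 by case: hcs => + _; apply.
have nT1 : ~ eta T1 by move=> eT1; apply: naT1; apply: Ha => //; exists b.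
have nT0 : ~ eta T0 by move=> eT0; apply: nbT0; apply: Hb => //; exists a.
have [G0 eG0 G0T0] := mls_disj m hex cT0 nT0.
have [G1 eG1 G1T1] := mls_disj m hex cT1 nT1.
have [w [G0w G1w]] := mls_linked m eG0 eG1.
have : (T0 `|` T1) w by rewrite T01.
case=> [T0w|T1w].
  by have : (G0 `&` T0) w by []; rewrite G0T0.
by have : (G1 `&` T1) w by []; rewrite G1T1.
Qed.

Definition FibM y (eta : set (set X)) T := S T /\ eta T /\ exists q, f q = y /\ T q.

Lemma P_fin y eta (s : seq (set X)) : mls eta ->
  (forall T, T \in s -> FibM y eta T) ->
  exists p, f p = y /\ forall T, T \in s -> T p.
Proof.
move=> m; elim: s => [|T s IH] Hs.
  by have [q fq] := hsurj y; exists q.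
have [a [fa Ha]] : exists p, f p = y /\ forall T, T \in s -> T p.
  by apply: IH => U Us; apply: Hs; rewrite inE Us orbT.
have [ST [eT [b [fb Tb]]]] : FibM y eta T by apply: Hs; rewrite inE eqxx.
pose L := [set U | U = T \/ (U \in s) \/ (S U /\ U a /\ U b)].
have LS : L `<=` S.
  move=> U [->//|[Us|[]//]].
  have HU : FibM y eta U by apply: Hs; rewrite inE Us orbT.
  by case: HU.
have Lab : forall U, L U -> U a \/ U b.
  move=> U [->|[Us|[_ [Ua _]]]]; [by right|by left; apply: Ha|by left].
have Leta : forall U, L U -> eta U \/ (U a /\ U b).
  move=> U [->|[Us|[_ [Ua Ub]]]]; [by left|left|by right].
  have HU : FibM y eta U by apply: Hs; rewrite inE Us orbT.
  by case: HU => _ [].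
have lk : linked L.
  move=> A B LA LB.
  case: (Leta _ LA) => [eA|[Aa Ab]]; last first.
    by case: (Lab _ LB) => [Ba|Bb]; [exists a|exists b].
  case: (Leta _ LB) => [eB|[Ba Bb]]; last first.
    by case: (Lab _ LA) => [Aa|Ab]; [exists a|exists b].
  exact: mls_linked m eA eB.
have [w Lw] := hbin LS lk.
exists w; split; last first.
  move=> U; rewrite inE => /orP [/eqP ->|Us]; apply: Lw; [by left|by right; left].
have : (f @^-1` [set y]) w.
  apply: (hconv fa fb) => U [SU sU].
  apply: Lw; right; right; split => //; split; apply: sU; [by left|by right].
by [].
Qed.

End Core.

Section Ex.
Context {X Y : topologicalType} (S : set (set X)) (f : X -> Y).
Hypothesis hcs : closed_subbase S.
Hypothesis hbin : binary_family S.
Hypothesis hsurj : forall y : Y, exists x : X, f x = y.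
Hypothesis hconv : S_convex_map S f.
Hypothesis hc : compact [set: X].
Hypothesis hfib : forall y, closed (f @^-1` [set y]).

Lemma P_ex y eta : mls eta -> exists p, Pset S f y eta p.
Proof.
move=> m.
pose D := [set T : set X | T = f @^-1` [set y] \/ FibM S f y eta T].
have fI : finI D id.
  move=> D' sD'.
  have [p [fp Hp]] := @P_fin X Y S f hbin hsurj hconv y eta
    [seq T <- finmap.enum_fset D' | `[< FibM S f y eta T >]] m
    (fun T => ltac:(rewrite mem_filter => /andP [/asboolP H _]; exact: H)).
  exists p => T /= TD'.
  have := sD' _ TD'; move/set_mem => -[->//|FT].
  apply: Hp; rewrite mem_filter; apply/andP; split; [exact/asboolP|exact: TD'].
have PF := finI_filter fI.
have [p [_ cl]] := hc PF (filterT).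
have Dp : forall T, D T -> T p.
  move=> T DT.
  have cT : closed T.
    case: DT => [->|[ST _]]; first exact: hfib.
    by case: hcs => + _; apply.
  apply: cT => B nB; apply: cl nB.
  by exists T => //; exact: finI_from1.
exists p; split; first by have := Dp _ (or_introl erefl).
move=> T ST eT ex; apply: Dp; right; split => //.
Qed.

End Ex.

Section Xi.
Context {X : topologicalType}.
Hypothesis hT1 : forall x : X, closed [set x].

Lemma xi_mls (x : X) : mls [set F : set X | closed F /\ F x].
Proof.
split.
- by move=> F [].
- by move=> A B [_ Ax] [_ Bx]; exists x.
- move=> eta' cl lk sub; apply/seteqP; split; last exact: sub.
  move=> G eG; split; first exact: cl.
  have := lk _ _ eG (sub _ (conj (@hT1 x) erefl)).
  by case=> w [Gw <-].
Qed.

Definition xi (x : X) : superext X := Superext (xi_mls x).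

Lemma plus_open (U : set X) : open U -> open (plus_set U : set (superext X)).
Proof.
move=> oU; exists [set plus_set U].
  by move=> _ ->; exact: finI_from1.
by rewrite bigcup_set1.
Qed.

End Xi.

Section XiCont.
Context {X : topologicalType}.
Hypothesis hT1 : forall x : X, closed [set x].

Lemma xi_cont : continuous (xi hT1).
Proof.
move=> x W; rewrite nbhsE => -[B [oB Bx] BW].
case: oB => Ds sDs eB.
move: Bx; rewrite -eB => -[i Dsi ixi].
have [D'' sD'' ei] := sDs _ Dsi.
move: ixi; rewrite -ei => ixi.
rewrite /= nbhs_filterE.
apply: (@filterS _ _ _ (\bigcap_(j in [set` D'']) j)); last first.
  apply: filter_bigI => j jD.
  apply: open_nbhs_nbhs; split.
    by have := sD'' _ jD; move/set_mem.
  by have [F [_ Fx] Fj] := ixi _ jD; exact: Fj.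
move=> z zj; apply: BW; rewrite -eB; exists i => //; rewrite -ei.
move=> j jD; exists [set z]; first by split => //; exact: (@hT1 z).
by move=> w ->; exact: zj.
Qed.

End XiCont.

Section Main.
Context {X Y Z : topologicalType} (S : set (set X)) (f : X -> Y).
Hypothesis hcs : closed_subbase S.
Hypothesis hT1 : forall x : X, closed [set x].
Hypothesis hbin : binary_family S.
Hypothesis hnorm : normal_family S.
Hypothesis hsurj : forall y : Y, exists x : X, f x = y.
Hypothesis hconv : S_convex_map S f.
Hypothesis hc : compact [set: X].
Hypothesis hfib : forall y, closed (f @^-1` [set y]).
Hypothesis hex : exists x : X, True.
Hypothesis hYH : hausdorff_space Y.
Hypothesis hfc : continuous f.
Hypothesis hop : open_map f.
Variable x0 : X.

Definition rho y (eta : superext X) := xget x0 (Pset S f y (sx_sys eta)).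

Lemma rhoP y eta : Pset S f y (sx_sys eta) (rho y eta).
Proof. apply: xgetPex; exact: (P_ex hcs hbin hsurj hconv hc hfib y (sx_mls eta)). Qed.

Lemma rho_xi x : rho (f x) (xi hT1 x) = x.
Proof.
apply: (P_uniq hcs hT1 hbin hnorm hex (sx_mls (xi hT1 x))); first exact: rhoP.
by split => // T _ [_ Tx].
Qed.

Lemma rho_cont (k : Z -> Y) (Psi : Z -> superext X) :
  continuous k -> continuous Psi -> continuous (fun z => rho (k z) (Psi z)).
Proof.
move=> ck cP z0 W; rewrite nbhsE => -[W' [oW' W'p] W'W].
have cK : compact (~` W').
  by apply: (subclosed_compact (open_closedC oW') hc).
set p0 := rho (k z0) (Psi z0) in W'p.
have cover : forall q, (~` W') q ->
    \forall x' \near q & i \near nbhs z0, rho (k i) (Psi i) <> x'.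
  move=> q nq.
  have pq : p0 <> q by move=> E; apply: nq; rewrite -E.
  have [S0 [S1 [SS0 SS1 S0p S1q S01]]] := sep2 hcs hT1 hbin pq.
  have [T0 [T1 [ST0 ST1 S0T1 T0S1 T01]]] := hnorm SS0 SS1 S01.
  have cT0 : closed T0 by case: hcs => + _; apply.
  have cT1 : closed T1 by case: hcs => + _; apply.
  have np0T1 : ~ T1 p0 by move=> T1p; have : (S0 `&` T1) p0 by []; rewrite S0T1.
  have nqT0 : ~ T0 q by move=> T0q; have : (T0 `&` S1) q by []; rewrite T0S1.
  suff [N NN NT0] : exists2 N, nbhs z0 N &
      forall z, N z -> T0 (rho (k z) (Psi z)).
    exists (~` T0, N); first split => //=.
      by apply: open_nbhs_nbhs; split => //; exact: closed_openC.
    by move=> [x' z] [/= nx' Nz] E; apply: nx'; rewrite -E; exact: NT0.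
  have [_ Hp0] := rhoP (k z0) (Psi z0).
  case: (pselect (sx_sys (Psi z0) T1)) => [eT1|neT1].
    exists (k @^-1` (~` (f @` T1))).
      apply: ck; apply: open_nbhs_nbhs; split.
        rewrite openC; apply: (compact_closed hYH).
        apply: continuous_compact.
          by apply: continuous_subspaceT => x; exact: hfc.
        exact: (subclosed_compact cT1 hc).
      by move=> [t T1t ft]; apply: np0T1; apply: Hp0 => //; exists t.
    move=> z /= nz; have [fz _] := rhoP (k z) (Psi z).
    have : (T0 `|` T1) (rho (k z) (Psi z)) by rewrite T01.
    by case => // T1r; exfalso; apply: nz; exists (rho (k z) (Psi z)).
  have [G1 eG1 G1T1] := mls_disj (sx_mls (Psi z0)) hex cT1 neT1.
  exists (k @^-1` (f @` (~` T1)) `&` Psi @^-1` (plus_set (~` T1))).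
    apply: filterI; [apply: ck|apply: cP]; apply: open_nbhs_nbhs; split.
    - exact: hop (closed_openC cT1).
    - by exists p0 => //; have [] := rhoP (k z0) (Psi z0).
    - exact: plus_open (closed_openC cT1).
    - exists G1 => // w G1w T1w.
      by have : (G1 `&` T1) w by []; rewrite G1T1.
  move=> z [[q' nq' fq'] [G' eG' G'T1]].
  have T0q : T0 q'.
    have : (T0 `|` T1) q' by rewrite T01.
    by case => // /nq'.
  have eT0 : sx_sys (Psi z) T0.
    apply: (mls_add (sx_mls (Psi z))) => //; first by exists q'.
    move=> H eH; have [w [Hw G'w]] := mls_linked (sx_mls (Psi z)) eH eG'.
    exists w; split => //.
    have : (T0 `|` T1) w by rewrite T01.
    by case => // /(G'T1 _ G'w).
  have [_ Hr] := rhoP (k z) (Psi z).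
  by apply: Hr => //; exists q'.
have := (iffLR (compact_near_coveringP (~` W'))) cK Z (nbhs z0)
  (fun z x => rho (k z) (Psi z) <> x) (@nbhs_filter Z z0) cover.
move=> Hn; suff : nbhs z0 ((fun z => rho (k z) (Psi z)) @^-1` W) by [].
apply: (filterS _ Hn) => z Hz; apply: W'W; apply: contrapT => nW.
exact: Hz _ nW erefl.
Qed.

End Main.
Unset Implicit Arguments. Set Strict Implicit.

Theorem corollary3p2 (A : space_class) (X : topologicalType)
    (S : set (set X)) :
  (forall Z, A Z -> tychonoff_space Z) ->
  compactum X ->
  closed_subbase S -> binary_family S -> normal_family S ->
  (forall Z, A Z -> AE_for (superext X) Z) ->
  forall (Y : topologicalType) (f : X -> Y),
    tychonoff_space Y -> continuous f -> (forall y : Y, exists x : X, f x = y) ->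
    open_map f -> S_convex_map S f ->
    soft A f.
Proof.
move=> _ [hc hXH] hcs hbin hnorm hAE Y f [_ hYH] hfc hsurj hop hconv
  Z AZ B k h cB ck ch hfh.
have hT1 : forall x : X, closed [set x].
  by move=> x; apply: accessible_closed_set1; exact: hausdorff_accessible.
have hex : exists x : X, True.
  have [x _] := hbin set0 (sub0set _) (fun A B (a : set0 A) => False_ind _ a).
  by exists x.
have hfib : forall y, closed (f @^-1` [set y]).
  move=> y; apply: (iffLR (continuous_closedP f)) => //.
  by apply: accessible_closed_set1; exact: hausdorff_accessible.
have [x0 _] := hex.
have chi : {within B, continuous (xi hT1 \o h)}.
  move=> z; exact: (@continuous_comp (subspace B) X _ (from_subspace B h) (xi hT1) z (ch z) (@xi_cont X hT1 (h z))).
have [Psi [cPsi ePsi]] := hAE Z AZ B (xi hT1 \o h) cB chi.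
exists (fun z => rho S f x0 (k z) (Psi z)); split.
- exact: (rho_cont hcs hT1 hbin hnorm hsurj hconv hc hfib hex hYH hfc hop).
- move=> z Bz; rewrite ePsi //= -hfh //.
  exact: (rho_xi hcs hT1 hbin hnorm hsurj hconv hc hfib hex).
- by move=> z; have [] := rhoP hcs hbin hsurj hconv hc hfib x0 (k z) (Psi z).
Qed.
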